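(* Let $\alpha=(\alpha_j)_{j\ge1}$ and $\beta=(\beta_j)_{j\ge0}$ be sequences of positive numbers (or independent variables) and let $\zeta_{nk}=\zeta_{nk}(\alpha,\beta)$ be the Euler polynomials generated by $\alpha,\beta$. If $n\in\mathbf N$ and $0\le k\le n$, then $$\zeta_{nk}(\alpha,\beta)=\zeta_{n-1,k-1}(\alpha,\beta)\,\alpha_{n-k+1}+\zeta_{n-1,k}(\alpha,\beta)\,\beta_k .$$
   Context: For $\omega=(\varepsilon_1,\dots,\varepsilon_n)\in\{0,1\}^n$ define $w_n(\omega)=\prod_{m=1}^n g_m$, where, with $j=\#\{l:1\le l\le m-1,\ \varepsilon_l=0\}$, $g_m=\alpha_{m-j}$ if $\varepsilon_m=0$ and $g_m=\beta_j$ if $\varepsilon_m=1$. For $n\ge1$, $0\le k\le n$, $\zeta_{nk}(\alpha,\beta)=\sum w_n(\omega)$ over all $\omega\in\{0,1\}^n$ with exactly $k$ zeros; $\zeta_{00}=1$ and $\zeta_{nk}=0$ if $k<0$ or $k>n$. *)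

(* Defs.v *)
From mathcomp Require Import all_boot all_algebra.
Set Implicit Arguments. Unset Strict Implicit. Unset Printing Implicit Defensive.
Import GRing.Theory.
Local Open Scope ring_scope.

(* A word omega = (eps_1,...,eps_n) in {0,1}^n is a finite function
   'I_n -> bool; position i : 'I_n stands for m = i+1, and
   [eps i = false] means eps_m = 0, [eps i = true] means eps_m = 1. *)

Definition zeros_before (n : nat) (w : {ffun 'I_n -> bool}) (i : 'I_n) : nat :=
  #|[set l : 'I_n | (l < i)%N && ~~ w l]|.

Definition nzeros (n : nat) (w : {ffun 'I_n -> bool}) : nat :=
  #|[set l : 'I_n | ~~ w l]|.

Definition gfac (R : comRingType) (alpha beta : nat -> R) (n : nat)
  (w : {ffun 'I_n -> bool}) (i : 'I_n) : R :=
  let j := zeros_before w i in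
  if w i then beta j else alpha (i.+1 - j)%N.

Definition weight (R : comRingType) (alpha beta : nat -> R) (n : nat)
  (w : {ffun 'I_n -> bool}) : R :=
  \prod_(i : 'I_n) gfac alpha beta w i.

(* zeta_{nk}: sum of weights over omega with exactly k zeros;
   zeta_{nk} = 0 for k < 0 (and automatically for k > n, empty sum);
   zeta_{00} = 1 (the empty product for the unique empty word). *)
Definition zeta (R : comRingType) (alpha beta : nat -> R) (n : nat) (k : int) : R :=
  match k with
  | Posz k => \sum_(w : {ffun 'I_n -> bool} | nzeros w == k) weight alpha beta w
  | Negz _ => 0
  end.

(* Main.v *)
Require Import Defs.
From mathcomp Require Import all_boot all_algebra.
Import GRing.Theory.
Local Open Scope ring_scope.

Lemma card_recr m (P : pred 'I_m.+1) :
  #|[set l | P l]| = (#|[set l : 'I_m | P (widen_ord (leqnSn m) l)]| + P ord_max)%N.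
Proof.
rewrite -!sum1dep_card [LHS]big_mkcond big_ord_recr /= [in RHS]big_mkcond /=.
by case: (P ord_max); rewrite ?addn0 ?addn1.
Qed.

Lemma widen_lift m (j : 'I_m) : widen_ord (leqnSn m) j = lift ord_max j.
Proof. by apply: val_inj; rewrite /= /bump leqNgt ltn_ord. Qed.

Definition hh m (p : {ffun 'I_m -> bool} * bool) : {ffun 'I_m.+1 -> bool} :=
  [ffun i : 'I_m.+1 => if unlift ord_max i is Some j then p.1 j else p.2].

Definition gg m (w : {ffun 'I_m.+1 -> bool}) : {ffun 'I_m -> bool} * bool :=
  ([ffun j => w (lift ord_max j)], w ord_max).

Arguments hh {m}.
Arguments gg {m}.

Lemma hh_w m (p : {ffun 'I_m -> bool} * bool) (j : 'I_m) : hh p (widen_ord (leqnSn m) j) = p.1 j.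
Proof. by rewrite widen_lift ffunE liftK. Qed.

Lemma hh_max m (p : {ffun 'I_m -> bool} * bool) : hh p (@ord_max m) = p.2.
Proof. by rewrite ffunE unlift_none. Qed.

Lemma hh_bij m : bijective (@hh m).
Proof.
exists (@gg m).
  move=> [u b]; rewrite /gg hh_max; congr (_, _); apply/ffunP => j.
  by rewrite ffunE -widen_lift hh_w.
move=> w; apply/ffunP => i; rewrite /gg.
case: (unliftP ord_max i) => [j ->|->].
  by rewrite -widen_lift hh_w /= ffunE widen_lift.
by rewrite hh_max.
Qed.

Lemma nz_hh m (p : {ffun 'I_m -> bool} * bool) : nzeros (@hh m p) = (nzeros p.1 + ~~ p.2)%N.
Proof.
rewrite /nzeros card_recr hh_max; congr (_ + _)%N.
by apply: eq_card => l; rewrite !inE hh_w.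
Qed.

Lemma zb_w m (p : {ffun 'I_m -> bool} * bool) (j : 'I_m) :
  zeros_before (hh p) (widen_ord (leqnSn m) j) = zeros_before p.1 j.
Proof.
rewrite /zeros_before card_recr /=.
rewrite ltnNge (ltnW (ltn_ord j)) /= addn0.
by apply: eq_card => l; rewrite !inE hh_w.
Qed.

Lemma zb_max m (p : {ffun 'I_m -> bool} * bool) : zeros_before (hh p) (@ord_max m) = nzeros p.1.
Proof.
rewrite /zeros_before card_recr /= ltnn /= addn0.
by apply: eq_card => l; rewrite !inE hh_w ltn_ord.
Qed.

Lemma weight_hh (R : comRingType) (alpha beta : nat -> R) m (p : {ffun 'I_m -> bool} * bool) :
  weight alpha beta (@hh m p) = weight alpha beta p.1 *
    (if p.2 then beta (nzeros p.1) else alpha (m.+1 - nzeros p.1)%N).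
Proof.
rewrite /weight big_ord_recr /=; congr (_ * _).
  apply: eq_bigr => j _; by rewrite /gfac zb_w hh_w.
by rewrite /gfac zb_max hh_max.
Qed.

Theorem theorem6p1 (R : comRingType) (alpha beta : nat -> R) (n k : nat) :
  (1 <= n)%N -> (k <= n)%N ->
  zeta alpha beta n (k%:Z) =
    zeta alpha beta n.-1 (k%:Z - 1) * alpha (n - k + 1)%N
    + zeta alpha beta n.-1 (k%:Z) * beta k.
Proof.
case: n => [//|m] _ hk /=.
rewrite /zeta (reindex (@hh m)); last by apply: onW_bij; apply: hh_bij.
rewrite big_mkcond /= -(pair_bigA _ (fun u b =>
   if nzeros (hh (u, b)) == k then weight alpha beta (hh (u, b)) else 0)) /=.
under eq_bigr => u _ do rewrite big_bool /= !nz_hh !weight_hh /= addn0 addn1.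
rewrite big_split /= addrC.
case: k hk => [|k] hk.
  have -> : (0%:Z - 1) = Negz 0 by [].
  rewrite mul0r add0r big_distrl /= [in RHS]big_mkcond /=.
  rewrite big1_eq add0r; apply: eq_bigr => u _; by case: eqP => [->|].
have -> : (k.+1%:Z - 1) = k%:Z by rewrite intS addrC addKr.
rewrite !big_distrl /= [in RHS]big_mkcond [X in _ = _ + X]big_mkcond /=.
congr (_ + _); apply: eq_bigr => u _.
  rewrite eqSS; case: eqP => [->|] //.
  by rewrite addn1 subSS (subSn (hk : (k <= m)%N)).
by case: eqP => [->|].
Qed.
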